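(* Let $I\subset\mathbb{R}$ be an interval and let $M,N\colon I^2\to I$ be means. Then the mean-type mapping $(M,N)$ is weakly contractive if and only if the mean-type mapping $(M_2,N_2)$ is diagonally contractive, i.e. $|M_2(x,y)-N_2(x,y)|<|x-y|$ for all $x,y\in I$ with $x\neq y$.
   Context: A function $M\colon I^2\to\mathbb{R}$ is a mean in $I$ if $\min(x,y)\le M(x,y)\le\max(x,y)$ for all $x,y\in I$. For means $M,N\colon I^2\to I$, the mean-type mapping $(M,N)\colon I^2\to I^2$ is $(x,y)\mapsto(M(x,y),N(x,y))$, and for $n\in\mathbb{N}$ the functions $M_n,N_n\colon I^2\to I$ are defined by $(M_n,N_n):=(M,N)^n$ (the $n$-th iterate under composition). The mapping $(M,N)$ is weakly contractive if for all $x,y\in I$ with $x\ne y$ there exists a positive integer $n=n(x,y)$ such that $|M_n(x,y)-N_n(x,y)|<|x-y|$. *)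

(* Defs.v *)
From Stdlib Require Import Reals.
Open Scope R_scope.

Definition is_interval (I : R -> Prop) : Prop :=
  forall x y z, I x -> I y -> x <= z <= y -> I z.

(* M : I^2 -> I is a mean in I (functions are total on R^2; only values on I^2 matter). *)
Definition is_mean_on (I : R -> Prop) (M : R -> R -> R) : Prop :=
  (forall x y, I x -> I y -> I (M x y)) /\
  (forall x y, I x -> I y -> Rmin x y <= M x y <= Rmax x y).

Definition mt_map (M N : R -> R -> R) (p : R * R) : R * R :=
  (M (fst p) (snd p), N (fst p) (snd p)).

Fixpoint mt_iter (M N : R -> R -> R) (n : nat) (p : R * R) : R * R :=
  match n with
  | O => p
  | S k => mt_map M N (mt_iter M N k p)
  end.

Definition Mn (M N : R -> R -> R) (n : nat) (x y : R) : R := fst (mt_iter M N n (x, y)).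
Definition Nn (M N : R -> R -> R) (n : nat) (x y : R) : R := snd (mt_iter M N n (x, y)).

Definition weakly_contractive (I : R -> Prop) (M N : R -> R -> R) : Prop :=
  forall x y, I x -> I y -> x <> y ->
    exists n : nat, (0 < n)%nat /\ Rabs (Mn M N n x y - Nn M N n x y) < Rabs (x - y).

Definition diagonally_contractive (I : R -> Prop) (M N : R -> R -> R) : Prop :=
  forall x y, I x -> I y -> x <> y -> Rabs (M x y - N x y) < Rabs (x - y).

(* Main.v *)
Require Import Defs.
From Stdlib Require Import Reals Lra.
Open Scope R_scope.

Lemma mean_dist (x y a b : R) :
  Rmin x y <= a <= Rmax x y -> Rmin x y <= b <= Rmax x y ->
  Rabs (a - b) <= Rabs (x - y).
Proof.
  unfold Rmin, Rmax; destruct (Rle_dec x y);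
  unfold Rabs; repeat destruct Rcase_abs; lra.
Qed.

Lemma mean_extreme (x y a b : R) : x <> y ->
  Rmin x y <= a <= Rmax x y -> Rmin x y <= b <= Rmax x y ->
  Rabs (a - b) >= Rabs (x - y) ->
  (a = x /\ b = y) \/ (a = y /\ b = x).
Proof.
  intro H. unfold Rmin, Rmax; destruct (Rle_dec x y);
  unfold Rabs; repeat destruct Rcase_abs; intros; lra.
Qed.

Lemma iter_inv (M N : R -> R -> R) (P : R * R -> Prop) p n :
  P p -> (forall q, P q -> P (mt_map M N q)) -> P (mt_iter M N n p).
Proof. intros H1 H2; induction n; simpl; auto. Qed.

Theorem mainTheorem2 (I : R -> Prop) (M N : R -> R -> R) :
  is_interval I -> is_mean_on I M -> is_mean_on I N ->
  (weakly_contractive I M N <->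
   diagonally_contractive I (Mn M N 2) (Nn M N 2)).
Proof.
  intros HI [HM1 HM2] [HN1 HN2]; split.
  - intros WC x y Ix Iy nxy.
    destruct (Rlt_le_dec (Rabs (Mn M N 2 x y - Nn M N 2 x y)) (Rabs (x - y))) as [h|h];
      [exact h| exfalso].
    unfold Mn, Nn in h; simpl in h.
    set (a := M x y) in *. set (b := N x y) in *.
    assert (Ia : I a) by (apply HM1; auto).
    assert (Ib : I b) by (apply HN1; auto).
    pose proof (mean_dist x y a b (HM2 x y Ix Iy) (HN2 x y Ix Iy)) as d1.
    pose proof (mean_dist a b _ _ (HM2 a b Ia Ib) (HN2 a b Ia Ib)) as d2.
    destruct (mean_extreme x y a b nxy (HM2 x y Ix Iy) (HN2 x y Ix Iy) ltac:(lra))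
      as [[ea eb]|[ea eb]].
    + assert (Hfix : forall n, mt_iter M N n (x, y) = (x, y)).
      { intro n. apply (iter_inv M N (fun q => q = (x, y))); auto.
        intros q ->. unfold mt_map; simpl. fold a b. rewrite ea, eb. reflexivity. }
      destruct (WC x y Ix Iy nxy) as [n [_ Hn]].
      unfold Mn, Nn in Hn. rewrite Hfix in Hn. simpl in Hn. lra.
    + assert (nyx : y <> x) by auto.
      rewrite ea, eb in h.
      assert (Hm : Rmin y x <= M y x <= Rmax y x) by (apply HM2; auto).
      assert (Hn' : Rmin y x <= N y x <= Rmax y x) by (apply HN2; auto).
      assert (Hyx : Rabs (M y x - N y x) >= Rabs (y - x)).
      { rewrite (Rabs_minus_sym y x). lra. }
      pose proof (mean_extreme y x _ _ nyx Hm Hn' Hyx) as E2.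
      assert (Hs : forall n, mt_iter M N n (x, y) = (x, y) \/ mt_iter M N n (x, y) = (y, x)).
      { intro n. apply (iter_inv M N (fun q => q = (x, y) \/ q = (y, x))); auto.
        intros q [->| ->]; unfold mt_map; simpl.
        - fold a b. rewrite ea, eb. auto.
        - destruct E2 as [[e1 e2]|[e1 e2]]; rewrite e1, e2; auto. }
      destruct (WC x y Ix Iy nxy) as [n [_ Hn]].
      unfold Mn, Nn in Hn. destruct (Hs n) as [e|e]; rewrite e in Hn; simpl in Hn.
      * lra.
      * rewrite Rabs_minus_sym in Hn. lra.
  - intros DC x y Ix Iy nxy. exists 2%nat. split; [auto|].
    apply DC; auto.
Qed.
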